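(* Let $A\in\{\mathbb Z,\mathbb R\}$ and let $X\subset\mathbb R^d$ be a bounded subset whose convex hull is full-dimensional. Then every $A$-$X$-free convex body in $\mathbb R^d$ is contained in a full-dimensional $A$-$X$-free convex body.
   Context: A convex body in $\mathbb R^d$ is a nonempty compact convex subset of $\mathbb R^d$. An $A$-unimodular transformation is a map $T(x)=Mx+b$ with $M\in \mathrm{GL}_d(\mathbb Z)$ and $b\in A^d$; an $A$-unimodular copy of $X$ is $T(X)$ for such a $T$. A convex set is $A$-$X$-free if its relative interior contains no $A$-unimodular copy of $X$ (the relative interior of a single point is that point). *)

(* Defs.v *)
From HB Require Import structures.
From mathcomp Require Import all_boot all_order all_algebra.
From mathcomp Require Import all_classical all_reals topology normedtype matrix_topology.
Set Implicit Arguments. Unset Strict Implicit. Unset Printing Implicit Defensive.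
Import Order.TTheory GRing.Theory Num.Theory numFieldNormedType.Exports.
Local Open Scope ring_scope.
Local Open Scope classical_set_scope.

Inductive transl_group := AZ | AR.

Definition inA (R : realType) (A : transl_group) (r : R) : Prop :=
  match A with AZ => exists z : int, r = z%:~R | AR => True end.

Definition convex_set (R : realType) (d : nat) (C : set 'cV[R]_d) : Prop :=
  forall x y t, C x -> C y -> 0 <= t -> t <= 1 -> C (t *: x + (1 - t) *: y).

Definition convex_body (R : realType) (d : nat) (K : set 'cV[R]_d) : Prop :=
  K !=set0 /\ compact K /\ convex_set K.

Definition conv_hull (R : realType) (d : nat) (S : set 'cV[R]_d) : set 'cV[R]_d :=
  [set y | exists n (p : 'I_n -> 'cV[R]_d) (w : 'I_n -> R),
     (forall i, S (p i)) /\ (forall i, 0 <= w i) /\ \sum_(i < n) w i = 1 /\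
     y = \sum_(i < n) w i *: p i].

Definition aff_hull (R : realType) (d : nat) (S : set 'cV[R]_d) : set 'cV[R]_d :=
  [set y | exists n (p : 'I_n -> 'cV[R]_d) (w : 'I_n -> R),
     (forall i, S (p i)) /\ \sum_(i < n) w i = 1 /\
     y = \sum_(i < n) w i *: p i].

Definition full_dim (R : realType) (d : nat) (S : set 'cV[R]_d) : Prop :=
  aff_hull S = setT.

Definition relint (R : realType) (d : nat) (C : set 'cV[R]_d) : set 'cV[R]_d :=
  [set x | C x /\ exists2 e : R, 0 < e &
     forall y, aff_hull C y -> (forall i : 'I_d, `|y i 0 - x i 0| < e) -> C y].

(* GL_d(Z): integer matrices invertible over Z (determinant +-1) *)
Definition GLZ (d : nat) (M : 'M[int]_d) : Prop := M \in unitmx.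

Definition unimod_map (R : realType) (d : nat) (M : 'M[int]_d) (b : 'cV[R]_d)
  (x : 'cV[R]_d) : 'cV[R]_d := map_mx intr M *m x + b.

Definition X_free (R : realType) (d : nat) (A : transl_group)
  (X : set 'cV[R]_d) (C : set 'cV[R]_d) : Prop :=
  ~ exists (M : 'M[int]_d) (b : 'cV[R]_d),
      GLZ M /\ (forall i, inA A (b i 0)) /\ unimod_map M b @` X `<=` relint C.

(* Main.v *)
Require Import Defs.
From HB Require Import structures.
From mathcomp Require Import all_boot all_order all_algebra.
From mathcomp Require Import all_classical all_reals topology normedtype matrix_topology.
Import Order.TTheory GRing.Theory Num.Theory numFieldNormedType.Exports.
Local Open Scope ring_scope.
Local Open Scope classical_set_scope.
From mathcomp Require Import zify lra ring.
Set Implicit Arguments. Unset Strict Implicit. Unset Printing Implicit Defensive.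

Lemma span_aff (R : realType) d k (P : 'M[R]_(k,d)) (x0 : 'cV[R]_d) n
  (p : 'I_n -> 'cV[R]_d) (w : 'I_n -> R) :
  (forall i, ((p i - x0)^T <= P)%MS) -> \sum_i w i = 1 ->
  ((\sum_i w i *: p i - x0)^T <= P)%MS.
Proof.
move=> Hp Hw.
have -> : \sum_i w i *: p i - x0 = \sum_i w i *: (p i - x0).
  rewrite [in RHS](eq_bigr (fun i => w i *: p i - w i *: x0)) => [|i _]; last by rewrite scalerBr.
  by rewrite sumrB -scaler_suml Hw scale1r.
rewrite linear_sum; apply: summx_sub => i _ /=.
rewrite linearZ /=. apply: scalemx_sub. exact: Hp.
Qed.

Lemma aff_span (R : realType) d k (P : 'M[R]_(k,d)) (x0 : 'cV[R]_d) (S : set 'cV[R]_d) :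
  (forall x, S x -> ((x - x0)^T <= P)%MS) ->
  forall y, aff_hull S y -> ((y - x0)^T <= P)%MS.
Proof.
move=> HS y [n [p [w [Hp [Hw ->]]]]]; apply: span_aff => // i; exact: HS.
Qed.

Lemma conv_aff (R : realType) d (S : set 'cV[R]_d) : conv_hull S `<=` aff_hull S.
Proof. by move=> y [n [p [w [Hp [_ [Hw ->]]]]]]; exists n, p, w. Qed.

Lemma extract (R : realType) d (S : set 'rV[R]_d) :
  exists k (P : 'M[R]_(k,d)), [/\ forall i, S (row i P), row_free P &
     forall s, S s -> (s <= P)%MS].
Proof.
suff H : forall n k (P : 'M[R]_(k,d)), (d - k <= n)%N -> (forall i, S (row i P)) ->
   row_free P -> exists k' (P' : 'M[R]_(k',d)), [/\ forall i, S (row i P'), row_free P' &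
     forall s, S s -> (s <= P')%MS].
  apply: (H d 0%N 0) => //; first by rewrite subn0.
    by case.
  by rewrite /row_free -leqn0 rank_leq_row.
elim=> [|n IH] k P Hn HS Hf.
  exists k, P; split => // s _; apply: submx_full; rewrite /row_full.
  move/eqP: Hf => Hf; have := rank_leq_col P; rewrite Hf => Hkd.
  by rewrite eqn_leq Hkd /= -subn_eq0 -leqn0.
case: (pselect (forall s, S s -> (s <= P)%MS)) => [H|H]; first by exists k, P.
move/existsNP: H => [s /not_implyP [Ss Hs]].
have Hkd : (k < d)%N.
  have := rank_leq_col P; move/eqP: (Hf) => ->; rewrite leq_eqVlt => /orP[/eqP Ekd|//].
  by exfalso; apply: Hs; apply: submx_full; rewrite /row_full; move/eqP: (Hf) => ->; rewrite Ekd.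
apply: (IH _ (col_mx P s)).
- by move: Hn Hkd; lia.
- move=> i; case: (splitP i) => j Ej.
    have -> : i = lshift 1 j by apply: val_inj.
    rewrite rowKu; exact: HS.
  have -> : i = rshift k j by apply: val_inj; rewrite /= Ej.
  by rewrite rowKd ord1; have -> : row 0 s = s by apply/rowP => l; rewrite mxE; congr (s _ _); apply: val_inj; rewrite /= ord1.
- rewrite /row_free -(addsmxE P s).
  have Hcap : \rank (P :&: s)%MS = 0%N.
    have Hs0 : s != 0 by apply/eqP => s0; apply: Hs; rewrite s0 sub0mx.
    have := mxrank_leqif_eq (capmxSr P s); rewrite rank_rV Hs0.
    case=> Hle Heq; move: Hle; rewrite leq_eqVlt ltnS leqn0 => /orP[/eqP E1|/eqP //].
    exfalso; apply: Hs; have : (P :&: s == s)%MS by rewrite -Heq E1.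
    by case/andP => _ /submx_trans; apply; exact: capmxSl.
  have := mxrank_sum_cap P s; rewrite Hcap addn0 => ->.
  move/eqP: (Hf) => ->; rewrite rank_rV.
  suff -> : s != 0 by rewrite addn1.
  by apply/eqP => s0; apply: Hs; rewrite s0 sub0mx.
Qed.

Lemma full_of_span (R : realType) d (Y : set 'cV[R]_d) x0 k (P : 'M[R]_(k,d)) :
  Y x0 -> (forall i, exists p, Y p /\ row i P = (p - x0)^T) ->
  (forall v : 'rV[R]_d, (v <= P)%MS) -> full_dim Y.
Proof.
move=> Yx0 /choice [p Hp] Hv; apply/seteqP; split => // y _.
have /submxP [D HD] := Hv (y - x0)^T.
have Lr : forall i : 'I_k, fintype.split (rshift 1 i) = inr i by move=> i; exact: (unsplitK (inr i)).
have Ll : fintype.split (lshift k (ord0 : 'I_1)) = inl ord0 by exact: (unsplitK (inl ord0)).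
exists (1 + k)%N, (fun i => match fintype.split i with inl _ => x0 | inr j => p j end),
  (fun i => match fintype.split i with inl _ => 1 - \sum_j D 0 j | inr j => D 0 j end).
split; [|split].
- by move=> i; case: (fintype.split i) => [_|j] //; exact: (Hp j).1.
- rewrite big_split_ord big_ord1 /= Ll.
  rewrite [X in _ + X = _](eq_bigr (fun i => D 0 i)); last first.
    by move=> i _; have := Lr i; case: (fintype.split (rshift 1 i)) => // j [->].
  by rewrite subrK.
- rewrite big_split_ord big_ord1 /= Ll.
  rewrite [X in _ + X](eq_bigr (fun i => D 0 i *: p i)); last first.
    by move=> i _; have := Lr i; case: (fintype.split (rshift 1 i)) => // j [->].
  have E : \sum_j D 0 j *: (p j - x0) = y - x0.
    apply: trmx_inj; rewrite linear_sum HD mulmx_sum_row; apply: eq_bigr => j _.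
    by rewrite linearZ /= (Hp j).2.
  have -> : \sum_j D 0 j *: p j = \sum_j D 0 j *: (p j - x0) + (\sum_j D 0 j) *: x0.
    rewrite scaler_suml -big_split /=; apply: eq_bigr => j _.
    by rewrite scalerBr subrK.
  rewrite E scalerBl scale1r.
  by rewrite [y - x0 + _]addrC addrA subrK addrC subrK.
Qed.

Lemma det_bound (R : realType) n (A : 'M[R]_n) (B : R) : 0 <= B ->
  (forall i j, `|A i j| <= B) -> `|\det A| <= n`!%:R * B ^+ n.
Proof.
move=> B0 HA; rewrite /determinant.
apply: le_trans (ler_norm_sum _ _ _) _.
rewrite -(perm.card_Sn n) mulr_natl -sumr_const.
apply: ler_sum => s _.
rewrite normrM normr_sign mul1r normr_prod.
rewrite -[n in B ^+ n]card_ord -prodr_const.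
apply: ler_prod => i _; rewrite normr_ge0 /=; exact: HA.
Qed.

Lemma entry_le_norm (R : realType) m n (M : 'M[R]_(m,n)) i j : `|M i j| <= `|M|.
Proof.
rewrite [leRHS]/Num.norm /= mx_normrE.
by apply/bigmax_geP; right; exists (i, j).
Qed.

Lemma norm_le_entries (R : realType) m n (M : 'M[R]_(m,n)) (B : R) : 0 <= B ->
  (forall i j, `|M i j| <= B) -> `|M| <= B.
Proof.
move=> B0 H; rewrite [leLHS]/Num.norm /= mx_normrE.
by apply: bigmax_le => // ij _; exact: H.
Qed.

Lemma norm_trmx (R : realType) m n (M : 'M[R]_(m,n)) : `|M^T| = `|M|.
Proof.
apply/eqP; rewrite eq_le; apply/andP; split.
  by apply: norm_le_entries => // i j; rewrite mxE; exact: entry_le_norm.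
by apply: norm_le_entries => // i j; have := entry_le_norm M^T j i; rewrite mxE.
Qed.

Lemma trmx_continuous (R : realType) m n : continuous (fun M : 'M[R]_(m,n) => M^T).
Proof.
move=> M s /= /(nbhs_ballP (M^T)) [e e0 es].
apply/nbhs_ballP; exists e => //= N [_ MN]; apply: es; split => // i j.
rewrite !mxE; exact: MN.
Qed.

Lemma lip_continuous (R : realType) m n (f : 'M[R]_(m,n) -> R) (L : R) : 0 < L ->
  (forall y z, `|f y - f z| <= L * `|y - z|) -> continuous f.
Proof.
move=> L0 H x s /= /(nbhs_ballP (f x)) [e e0 es].
apply/nbhs_ballP; exists (e / L); first by rewrite /= divr_gt0.

move=> y; rewrite -ball_normE /= => xy; apply: es; rewrite -ball_normE /=.
apply: le_lt_trans (H x y) _.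
by rewrite mulrC -ltr_pdivlMr.
Qed.

Lemma cV_compact (R : realType) d (A : set 'cV[R]_d) : closed A ->
  (exists B : R, forall x, A x -> `|x| <= B) -> compact A.
Proof.
move=> cA [B HB].
have -> : A = (fun v : 'rV[R]_d => v^T) @` ((fun v : 'rV[R]_d => v^T) @^-1` A).
  apply/seteqP; split => [y Ay|_ [v Av <-] //].
  by exists y^T; rewrite /= ?trmxK.
apply: continuous_compact.
  by apply: continuous_subspaceT => v; exact: trmx_continuous.
apply: bounded_closed_compact.
  exists B; split; first exact: num_real.
  move=> M HM v /= Av; rewrite -norm_trmx; apply: le_trans (ltW HM); exact: HB.
apply: preimage_closed => // v _; exact: trmx_continuous.
Qed.

Lemma cvx_norm (R : realType) (V : normedModType R) (a b : V) (r t : R) :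
  `|a| <= r -> `|b| <= r -> 0 <= t -> t <= 1 -> `|t *: a + (1 - t) *: b| <= r.
Proof.
move=> ha hb t0 t1; apply: le_trans (ler_normD _ _) _.
rewrite !normrZ !ger0_norm ?subr_ge0 //.
have : t * `|a| + (1 - t) * `|b| <= t * r + (1 - t) * r.
  by apply: lerD; apply: ler_wpM2l => //; rewrite subr_ge0.
by rewrite -mulrDl subrKC mul1r.
Qed.

Unset Implicit Arguments.

Lemma detM1 (R : realType) d (M : 'M[int]_d) : GLZ M -> `|\det (map_mx (intr : int -> R) M)| = 1.
Proof.
rewrite /GLZ unitmxE => H.
rewrite (det_map_mx (intr : {rmorphism int -> R})).
move: H; rewrite qualifE => /orP[/eqP->|/eqP->]; by rewrite ?rmorphN rmorph1 ?normrN normr1.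
Qed.

Lemma arith (R : realType) (D b e : R) : 0 <= D -> 0 < e -> e * (2 * (D + 1)) <= b -> b <= D * (e + e) -> False.
Proof. move=> *; nra. Qed.

Lemma sub00 (R : realType) (A B : 'M[R]_1) : (A - B) 0 0 = A 0 0 - B 0 0.
Proof. by rewrite !mxE. Qed.

Lemma add00 (R : realType) (A B : 'M[R]_1) : (A + B) 0 0 = A 0 0 + B 0 0.
Proof. by rewrite !mxE. Qed.

Lemma scl00 (R : realType) (a : R) (A : 'M[R]_1) : (a *: A) 0 0 = a * A 0 0.
Proof. by rewrite !mxE. Qed.

Lemma scl00' (R : realType) n (a : R) (A : 'M[R]_(n,1)) i : (a *: A) i 0 = a * A i 0.
Proof. by rewrite !mxE. Qed.

Theorem lemma2p5 (R : realType) (d : nat) (A : transl_group) (X : set 'cV[R]_d) :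
  bounded_set X -> full_dim (conv_hull X) ->
  forall K : set 'cV[R]_d, convex_body K -> X_free A X K ->
  exists K' : set 'cV[R]_d,
    [/\ convex_body K', full_dim K', X_free A X K' & K `<=` K'].
Proof.
move=> _ fX K [K0 [cK cvK]] fK.
have [x0 Xx0] : exists x0, X x0.
  have : aff_hull (conv_hull X) 0 by rewrite fX.
  move=> [n [p [w [Hp [Hw _]]]]].
  case: n p w Hp Hw => [|n] p w Hp Hw.
    by move: Hw; rewrite big_ord0 => /eqP; rewrite eq_sym oner_eq0.
  have [m [q [w' [Hq [_ [Hw' _]]]]]] := Hp ord0.
  case: m q w' Hq Hw' => [|m] q w' Hq Hw'.
    by move: Hw'; rewrite big_ord0 => /eqP; rewrite eq_sym oner_eq0.
  by exists (q ord0).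
have [k [P [HPr HPf HPs]]] := extract [set (x - x0)^T | x in X].
have Hall : forall v : 'rV[R]_d, (v <= P)%MS.
  move=> v.
  have H1 : forall z, conv_hull X z -> ((z - x0)^T <= P)%MS.
    move=> z /conv_aff; apply: aff_span => x Xx; apply: HPs; by exists x.
  have := @aff_span R d k P x0 _ H1 (v^T + x0); rewrite addrK trmxK; apply.
  by rewrite fX.
have Ekd : k = d.
  apply/eqP; rewrite eqn_leq; move/eqP: (HPf) => <-; rewrite rank_leq_col /=.
  rewrite -[X in (X <= _)%N](mxrank1 R d); apply: mxrankS; apply/row_subP => i; exact: Hall.
subst k.
have uP : P \in unitmx by rewrite -row_free_unit.
have dP0 : 0 < `|\det P| by rewrite normr_gt0 -unitfE -unitmxE.
have HProw : forall i, exists x, X x /\ row i P = (x - x0)^T.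
  by move=> i; have [x Xx E] := HPr i; exists x.
case: (pselect (full_dim K)) => [Kfull|Knf].
  by exists K; split.
have [k0 Kk0] := K0.
have [kk [PK [HKr HKf HKs]]] := extract [set (y - k0)^T | y in K].
have [v Hv] : exists v : 'rV[R]_d, ~ (v <= PK)%MS.
  apply/existsNP => H; apply: Knf; apply: (@full_of_span R d K k0 kk PK) => // i.
  by have [y Ky E] := HKr i; exists y.
have CK0 : cokermx PK != 0.
  by apply/eqP => C0; apply: Hv; rewrite submxE C0 mulmx0.
have [i0 [j0 Hij]] := matrix0Pn _ CK0.
pose u := col j0 (cokermx PK).
have uj0 : u i0 0 != 0 by rewrite /u mxE.
have PKu : PK *m u = 0 by rewrite /u colE mulmxA mulmx_coker mul0mx.
pose dotu (y : 'cV[R]_d) := (y^T *m u) 0 0.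
pose c := dotu k0.
have dotK : forall y, K y -> dotu y = c.
  move=> y Ky; have /submxP [D HD] := HKs _ (ex_intro2 _ _ y Ky erefl).
  have : ((y - k0)^T *m u) 0 0 = 0 by rewrite HD -mulmxA PKu mulmx0 mxE.
  by rewrite linearB mulmxBl sub00 => /eqP; rewrite subr_eq0 => /eqP.
have [B1 [B1ge HB1]] : exists B1 : R, 0 <= B1 /\ forall y, K y -> `|y| <= B1.
  have [M [Mr HM]] := compact_bounded cK.
  exists (`|M| + 1); split; first by rewrite addr_ge0.
  move=> y Ky; apply: (HM (`|M| + 1)) => //.
  by apply: le_lt_trans (real_ler_norm Mr) _; rewrite ltrDl.
pose Rb := B1 + 1.
have Rb0 : 0 < Rb by rewrite /Rb ltr_wpDl.
pose L := \sum_i `|u i 0| + 1.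
have L1 : 1 <= L by rewrite /L lerDr sumr_ge0.
have L0 : 0 < L by apply: lt_le_trans L1.
have uL : forall i, `|u i 0| <= L.
  move=> i; rewrite /L (bigD1 i) //= -addrA lerDl; apply: addr_ge0 => //.
  by apply: sumr_ge0 => j _.
have dotLip : forall y z, `|dotu y - dotu z| <= L * `|y - z|.
  move=> y z; rewrite /dotu -sub00 -mulmxBl -linearB /= mxE.
  apply: le_trans (ler_norm_sum _ _ _) _.
  rewrite mulrC; apply: le_trans (_ : _ <= `|y - z| * \sum_l `|u l 0|) _.
    rewrite mulr_sumr; apply: ler_sum => l _; rewrite normrM ler_wpM2r // mxE.
    exact: entry_le_norm.
  by apply: ler_wpM2l => //; rewrite lerDl.
pose Cb : R := (d.-1)`!%:R * (Rb + Rb) ^+ d.-1.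
have Cb0 : 0 <= Cb by rewrite /Cb mulr_ge0 // exprn_ge0 // addr_ge0 // ltW.
pose beta := `|\det P| * `|u i0 0|.
have beta0 : 0 < beta by rewrite /beta mulr_gt0 // normr_gt0.
pose eps := Num.min 1 (beta / (2 * (d%:R * Cb + 1))).
have eps0 : 0 < eps.
  rewrite /eps lt_min ltr01 /= divr_gt0 // mulr_gt0 // ltr_wpDl //.
  by rewrite mulr_ge0.
have eps1 : eps <= 1 by rewrite /eps ge_min lexx.
have epsb : eps <= beta / (2 * (d%:R * Cb + 1)) by rewrite /eps ge_min lexx orbT.
pose Kp := ((fun y : 'cV[R]_d => `|y|) @^-1` [set r : R | r <= Rb]) `&`
           ((fun y => `|dotu y - c|) @^-1` [set r : R | r <= eps]).
have KKp : K `<=` Kp.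
  move=> y Ky; split => /=.
    by apply: le_trans (HB1 _ Ky) _; rewrite /Rb lerDl.
  by rewrite dotK // subrr normr0 ltW.
exists Kp; split => //.
- split; first by exists k0; exact: KKp.
  split.
    apply: cV_compact; last by exists Rb => y [].
    apply: closedI; apply: preimage_closed.
    + by move=> y _; exact: norm_continuous.
    + exact: closed_le.
    + move=> y _; apply: (@lip_continuous R d 1 _ L) => // y1 z1.
      apply: le_trans (ler_dist_dist _ _) _.
      have -> : dotu y1 - c - (dotu z1 - c) = dotu y1 - dotu z1 by rewrite opprB addrA subrK.
      exact: dotLip.
    + exact: closed_le.
  move=> y z t [Hy1 Hy2] [Hz1 Hz2] t0 t1; split => /=.
    exact: cvx_norm.
  have -> : dotu (t *: y + (1 - t) *: z) - c = t * (dotu y - c) + (1 - t) * (dotu z - c).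
    rewrite /dotu linearD !linearZ /= mulmxDl -!scalemxAl !mxE.
    ring.
  exact: (@cvx_norm R R^o).
- pose del := eps / L.
  have del0 : 0 < del by rewrite /del divr_gt0.
  have del1 : del <= 1.
    by apply: le_trans eps1; rewrite /del ler_pdivrMr // ler_peMr // ltW.
  apply: (@full_of_span R d Kp k0 d (del *: (1%:M : 'M[R]_d))).
  + exact: KKp.
  + move=> i; exists (k0 + del *: delta_mx i 0); split; last first.
      by rewrite addrAC subrr add0r !linearZ /= trmx_delta row1.
    split => /=.
      apply: (le_trans (ler_normD k0 (del *: delta_mx i 0))); rewrite /Rb lerD //; first exact: HB1.
      rewrite normrZ ger0_norm; last exact: ltW.
      have e1 : `|delta_mx i 0 : 'cV[R]_d| <= 1.
        by apply: norm_le_entries => // a b; rewrite mxE; case: (_ && _); rewrite /= ?mulr1n ?mulr0n ?normr1 ?normr0.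
      by apply: le_trans (ler_wpM2l (ltW del0) e1) _; rewrite mulr1.
    have -> : dotu (k0 + del *: delta_mx i 0) - c = del * u i 0.
      rewrite /c /dotu linearD linearZ /= mulmxDl -scalemxAl trmx_delta -rowE.
      by rewrite add00 scl00 [row i u 0 0]mxE addrAC subrr add0r.
    rewrite normrM (ger0_norm (ltW del0)); apply: le_trans (ler_wpM2l (ltW del0) (uL i)) _.
    by rewrite /del divfK // gt_eqF.
  + move=> w; rewrite (eqmx_scale 1%:M (lt0r_neq0 del0)) ; exact: submx1.
- move=> [M [b [GM [_ Hc]]]].
  pose M' := map_mx (intr : int -> R) M.
  have TK : forall x, X x -> Kp (M' *m x + b).
    by move=> x Xx; exact: (Hc _ (ex_intro2 _ _ x Xx erefl)).1.
  pose Q := P *m M'^T.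
  have rowQ : forall i, exists x, X x /\ row i Q = (M' *m x + b - (M' *m x0 + b))^T.
    move=> i; have [x [Xx E]] := HProw i; exists x; split => //.
    have -> : M' *m x + b - (M' *m x0 + b) = M' *m (x - x0).
      by rewrite mulmxBr opprD addrACA subrr addr0.
    by rewrite /Q row_mul E trmx_mul.
  have Qb : forall i l, `|Q i l| <= Rb + Rb.
    move=> i l; have [x [Xx E]] := rowQ i.
    have -> : Q i l = row i Q 0 l by rewrite [RHS]mxE.
    rewrite E; apply: le_trans (entry_le_norm _ _ _) _; rewrite norm_trmx.
    apply: le_trans (ler_normB _ _) _; apply: lerD; [exact: (TK x Xx).1 | exact: (TK x0 Xx0).1].
  have Qu : forall i, `|(Q *m u) i 0| <= eps + eps.
    move=> i; have [x [Xx E]] := rowQ i.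
    have -> : (Q *m u) i 0 = (row i Q *m u) 0 0 by rewrite -row_mul [RHS]mxE.
    rewrite E linearB mulmxBl /= sub00.
    set a := (_ 0 0); set a' := (_ 0 0).
    have -> : a - a' = (a - c) - (a' - c) by rewrite opprB addrA subrK.
    apply: le_trans (ler_normB _ _) _; apply: lerD; [exact: (TK x Xx).2 | exact: (TK x0 Xx0).2].
  have dQ : `|\det Q| = `|\det P|.
    by rewrite /Q det_mulmx det_tr normrM detM1 // mulr1.
  have key : \det Q * u i0 0 = \sum_i \adj Q i0 i * (Q *m u) i 0.
    have : \adj Q *m (Q *m u) = (\det Q)%:M *m u by rewrite mulmxA mul_adj_mx.
    move/matrixP => /(_ i0 0); rewrite mul_scalar_mx scl00' => <-.
    by rewrite [LHS]mxE.
  have bnd : beta <= d%:R * Cb * (eps + eps).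
    rewrite /beta -dQ -normrM key.
    apply: le_trans (ler_norm_sum _ _ _) _.
    rewrite -mulrA mulr_natl -[in X in _ *+ X](card_ord d) -sumr_const.
    apply: ler_sum => i _; rewrite normrM; apply: ler_pM => //.
    rewrite mxE /cofactor normrM normr_sign mul1r.
    apply: det_bound; first by rewrite addr_ge0 // ltW.
    by move=> a a'; rewrite mxE [col' _ _ _ _]mxE; exact: Qb.
  have h2 : 0 < 2 * (d%:R * Cb + 1) by rewrite mulr_gt0 // ltr_wpDl // mulr_ge0.
  apply: (@arith R (d%:R * Cb) beta eps (mulr_ge0 (ler0n _ _) Cb0) eps0 _ bnd).
  by rewrite -ler_pdivlMr.
Qed.
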